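(* Let $\Bbbk$ be a field, $n\ge2$, $q\in\Bbbk$ a primitive $n$-th root of unity, $T_n(q)$ the Taft algebra and $A$ a unital associative $\Bbbk$-algebra. Let $\cdot:T_n(q)\otimes A\to A$ be a partial action of $T_n(q)$ on $A$. If $g\cdot 1_A=1_A$, then $\cdot$ is a global action.
   Context: The Taft algebra $T_n(q)$ is the Hopf algebra generated by $g,x$ with relations $g^n=1$, $x^n=0$, $xg=qgx$, $g$ group-like, $\Delta(x)=x\otimes1+g\otimes x$, $\varepsilon(x)=0$. For a bialgebra $H$ with $\Delta(h)=h_1\otimes h_2$, a partial action of $H$ on $A$ is a linear map $\cdot:H\otimes A\to A$ with $1_H\cdot a=a$, $h\cdot(ab)=(h_1\cdot a)(h_2\cdot b)$ and $h\cdot(k\cdot a)=(h_1\cdot1_A)(h_2k\cdot a)$ for all $h,k\in H$, $a,b\in A$. It is global if moreover $h\cdot(k\cdot a)=hk\cdot a$ for all $h,k,a$ (equivalently $h\cdot1_A=\varepsilon(h)1_A$ for all $h$). *)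

(* Defs.v *)
From HB Require Import structures.
From mathcomp Require Import all_boot all_order all_algebra.
Set Implicit Arguments. Unset Strict Implicit. Unset Printing Implicit Defensive.
Import Order.TTheory GRing.Theory Num.Theory.
Local Open Scope ring_scope.

Section Taft.
Variables (k : fieldType) (n : nat) (q : k).

(* index (i, j) stands for the basis element g^i x^j *)
Local Notation tidx := ('I_n * 'I_n)%type.

Local Notation taft := {ffun tidx -> k^o}.
(* T_n(q) (x) T_n(q): coefficient functions on pairs of basis elements *)
Local Notation taft2 := {ffun (tidx * tidx) -> k^o}.

Definition tbasis (s : tidx) : taft := [ffun p => (p == s)%:R].

(* tmon i j = g^i x^j, for arbitrary naturals i, j;
   this uses g^n = 1 (i taken mod n) and x^n = 0 (zero when j >= n). *)
Definition tmon (i j : nat) : taft :=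
  [ffun p : tidx => ((p.1 == (i %% n)%N :> nat) && (p.2 == j :> nat))%:R].

(* product of basis elements: (g^a x^b)(g^c x^d) = q^(bc) g^(a+c) x^(b+d),
   from x g = q g x. *)
Definition tbmul (s t : tidx) : taft :=
  q ^+ (s.2 * t.1)%N *: tmon (s.1 + t.1)%N (s.2 + t.2)%N.

Definition tmul (u v : taft) : taft :=
  \sum_(s : tidx) \sum_(t : tidx) (u s * v t) *: tbmul s t.

Definition ttens (u v : taft) : taft2 := [ffun p => u p.1 * v p.2].

Definition tmul2 (U V : taft2) : taft2 :=
  \sum_(s : tidx * tidx) \sum_(t : tidx * tidx)
     (U s * V t) *: ttens (tbmul s.1 t.1) (tbmul s.2 t.2).

Definition delta_x : taft2 := ttens (tmon 0 1) (tmon 0 0) + ttens (tmon 1 0) (tmon 0 1).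

(* Delta(x^b), computed as Delta(x)^b since Delta is an algebra map *)
Fixpoint delta_xpow (b : nat) : taft2 :=
  if b is b'.+1 then tmul2 (delta_xpow b') delta_x else ttens (tmon 0 0) (tmon 0 0).

(* Delta(g^a x^b) = (g^a (x) g^a) Delta(x)^b  (g group-like) *)
Definition tdelta_b (s : tidx) : taft2 :=
  tmul2 (ttens (tmon s.1 0) (tmon s.1 0)) (delta_xpow s.2).

Definition tdelta (h : taft) : taft2 := \sum_(s : tidx) h s *: tdelta_b s.

End Taft.

Notation taft k n := {ffun ('I_n * 'I_n)%type -> (GRing.Field.sort k)^o}.

(* A linear map T_n(q) (x) A -> A, presented as a bilinear map T_n(q) -> A -> A. *)
Definition taft_bilinear (k : fieldType) (n : nat) (A : algType k)
    (act : taft k n -> A -> A) : Prop :=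
  (forall (c : k) (h h' : taft k n) (a : A), act (c *: h + h') a = c *: act h a + act h' a) /\
  (forall (h : taft k n) (c : k) (a b : A), act h (c *: a + b) = c *: act h a + act h b).

(* Partial action of T_n(q) on A (Sweedler sums expanded in the basis of T (x) T). *)
Definition taft_partial_action (k : fieldType) (n : nat) (q : k) (A : algType k)
    (act : taft k n -> A -> A) : Prop :=
  [/\ forall a : A, act (tmon k n 0 0) a = a,
      forall (h : taft k n) (a b : A),
        act h (a * b) = \sum_(p : ('I_n * 'I_n) * ('I_n * 'I_n))
           tdelta q h p *: (act (tbasis k p.1) a * act (tbasis k p.2) b)
    & forall (h h' : taft k n) (a : A),
        act h (act h' a) = \sum_(p : ('I_n * 'I_n) * ('I_n * 'I_n))
           tdelta q h p *: (act (tbasis k p.1) 1 * act (tmul q (tbasis k p.2) h') a)].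

Definition taft_global_action (k : fieldType) (n : nat) (q : k) (A : algType k)
    (act : taft k n -> A -> A) : Prop :=
  forall (h h' : taft k n) (a : A), act h (act h' a) = act (tmul q h h') a.

(* Main.v *)
Require Import Defs.
From HB Require Import structures.
From mathcomp Require Import all_boot all_order all_algebra.
Import GRing.Theory.
Local Open Scope ring_scope.
Set Implicit Arguments. Unset Strict Implicit.


Lemma collapse (k : fieldType) (I : finType) (V : lmodType k) (s0 : I) (F : I -> V) :
  \sum_s (((s == s0)%:R : k) *: F s) = F s0.
Proof.
rewrite (bigD1 s0) //= eqxx scale1r big1 ?addr0 // => s /negbTE ->.
by rewrite scale0r.
Qed.

Lemma collapseM (k : fieldType) (I : finType) (s0 : I) (F : I -> k) :
  \sum_s (((s == s0)%:R : k) * F s) = F s0.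
Proof.
rewrite (bigD1 s0) //= eqxx mul1r big1 ?addr0 // => s /negbTE ->.
by rewrite mul0r.
Qed.

Lemma scaleoE (k : fieldType) (a b : k) : (a *: (b : k^o)) = a * b.
Proof. by []. Qed.

Lemma ffun_expand (k : fieldType) (I : finType) (f : {ffun I -> k^o}) :
  f = \sum_t f t *: [ffun p => ((p == t)%:R : k^o)].
Proof.
apply/ffunP => p; rewrite sum_ffunE.
under eq_bigr => t _ do rewrite !ffunE scaleoE mulrC eq_sym.
by rewrite collapseM.
Qed.

Lemma tbasisE (k : fieldType) n (s p : 'I_n * 'I_n) : tbasis k s p = (p == s)%:R.
Proof. by rewrite ffunE. Qed.

Lemma tmon_basis (k : fieldType) n (s : 'I_n * 'I_n) :
  tmon k n s.1 s.2 = tbasis k s.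
Proof.
apply/ffunP => p; rewrite !ffunE modn_small //.
Qed.

Lemma tmon_eqmod (k : fieldType) n i1 i2 j : (i1 %% n = i2 %% n)%N ->
  tmon k n i1 j = tmon k n i2 j.
Proof. by move=> e; apply/ffunP => p; rewrite !ffunE e. Qed.

Lemma tmon_big (k : fieldType) n i j : (n <= j)%N -> tmon k n i j = 0.
Proof.
move=> hj; apply/ffunP => p; rewrite !ffunE.
case: (p.2 =P j :> nat) => [e|]; last by rewrite andbF.
by move: (ltn_ord p.2); rewrite e ltnNge hj.
Qed.

Lemma ttens_basis (k : fieldType) n (a b : 'I_n * 'I_n) :
  ttens (tbasis k a) (tbasis k b) = [ffun p => ((p == (a, b))%:R : k^o)].
Proof.
apply/ffunP => p; rewrite !ffunE -natrM mulnb.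
by case: p => [x y]; rewrite xpair_eqE.
Qed.

Lemma ttensE (k : fieldType) n (u v : taft k n) p : ttens u v p = u p.1 * v p.2.
Proof. by rewrite ffunE. Qed.

Lemma tmul_linl (k : fieldType) n (q c : k) (u u' v : taft k n) :
  tmul q (c *: u + u') v = c *: tmul q u v + tmul q u' v.
Proof.
rewrite /tmul scaler_sumr -big_split; apply: eq_bigr => s _.
rewrite scaler_sumr -big_split; apply: eq_bigr => t _.
rewrite !ffunE scaleoE mulrDl scalerDl; congr (_ + _).
by rewrite [in RHS]scalerA mulrA.
Qed.


Lemma tmul_linr (k : fieldType) n (q c : k) (u v v' : taft k n) :
  tmul q u (c *: v + v') = c *: tmul q u v + tmul q u v'.
Proof.
rewrite /tmul scaler_sumr -big_split; apply: eq_bigr => s _.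
rewrite scaler_sumr -big_split; apply: eq_bigr => t _.
rewrite !ffunE scaleoE mulrDr scalerDl; congr (_ + _).
by rewrite [in RHS]scalerA mulrCA.
Qed.

Lemma tmul_0l (k : fieldType) n (q : k) (v : taft k n) : tmul q 0 v = 0.
Proof.
by rewrite /tmul big1 // => s _; rewrite big1 // => t _; rewrite ffunE mul0r scale0r.
Qed.

Lemma tmul_0r (k : fieldType) n (q : k) (v : taft k n) : tmul q v 0 = 0.
Proof.
by rewrite /tmul big1 // => s _; rewrite big1 // => t _; rewrite ffunE mulr0 scale0r.
Qed.

Lemma tmul_suml (k : fieldType) n (q : k) (I : Type) (r : seq I) (F : I -> taft k n) v :
  tmul q (\sum_(i <- r) F i) v = \sum_(i <- r) tmul q (F i) v.
Proof.
apply: (big_ind2 (fun x y => tmul q x v = y)); first exact: tmul_0l.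
  by move=> x1 x2 y1 y2 <- <-; have := tmul_linl q 1 x1 y1 v; rewrite !scale1r.
by [].
Qed.

Lemma tmul_sumr (k : fieldType) n (q : k) (I : Type) (r : seq I) (F : I -> taft k n) v :
  tmul q v (\sum_(i <- r) F i) = \sum_(i <- r) tmul q v (F i).
Proof.
apply: (big_ind2 (fun x y => tmul q v x = y)); first exact: tmul_0r.
  by move=> x1 x2 y1 y2 <- <-; have := tmul_linr q 1 v x1 y1; rewrite !scale1r.
by [].
Qed.

Lemma tmul_scalel (k : fieldType) n (q c : k) (u v : taft k n) :
  tmul q (c *: u) v = c *: tmul q u v.
Proof. by rewrite -[c *: u]addr0 tmul_linl tmul_0l addr0. Qed.

Lemma tmul_scaler (k : fieldType) n (q c : k) (u v : taft k n) :
  tmul q u (c *: v) = c *: tmul q u v.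
Proof. by rewrite -[c *: v]addr0 tmul_linr tmul_0r addr0. Qed.

Lemma tmul_basisl (k : fieldType) n (q : k) (s : 'I_n * 'I_n) v :
  tmul q (tbasis k s) v = \sum_t v t *: tbmul q s t.
Proof.
rewrite /tmul; under eq_bigr => s' _ do (under eq_bigr => t' _ do rewrite tbasisE -scalerA; rewrite -scaler_sumr).
by rewrite collapse.
Qed.

Lemma tmul_basis (k : fieldType) n (q : k) (s t : 'I_n * 'I_n) :
  tmul q (tbasis k s) (tbasis k t) = tbmul q s t.
Proof.
rewrite tmul_basisl; under eq_bigr => t' _ do rewrite tbasisE.
by rewrite collapse.
Qed.

Lemma tmon_ord (k : fieldType) n (n0 : (0 < n)%N) a b (hb : (b < n)%N) :
  tmon k n a b = tbasis k (Ordinal (ltn_pmod a n0), Ordinal hb).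
Proof. by rewrite -tmon_basis /=; apply: tmon_eqmod; rewrite modn_mod. Qed.

Lemma tmul_mon (k : fieldType) n (q : k) (n0 : (0 < n)%N) a b c d :
  tmul q (tmon k n a b) (tmon k n c d) = q ^+ (b * (c %% n)) *: tmon k n (a + c) (b + d).
Proof.
case: (ltnP b n) => hb; last first.
  by rewrite [tmon k n a b]tmon_big // tmul_0l tmon_big ?scaler0 // (leq_trans hb (leq_addr _ _)).
case: (ltnP d n) => hd; last first.
  by rewrite [tmon k n c d]tmon_big // tmul_0r tmon_big ?scaler0 // (leq_trans hd (leq_addl _ _)).
rewrite (tmon_ord _ n0 a hb) (tmon_ord _ n0 c hd) tmul_basis /tbmul /=.
by congr (_ *: _); apply: tmon_eqmod; rewrite modnDm.
Qed.

Lemma tmul_1l (k : fieldType) n (q : k) (n0 : (0 < n)%N) (h : taft k n) :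
  tmul q (tmon k n 0 0) h = h.
Proof.
rewrite (tmon_ord _ n0 0 n0) tmul_basisl [RHS]ffun_expand.
apply: eq_bigr => t _; congr (_ *: _).
rewrite /tbmul /= mul0n expr0 scale1r mod0n !add0n.
exact: (tmon_basis k t).
Qed.

Lemma tbmul_1l (k : fieldType) n (q : k) (n0 : (0 < n)%N) t :
  tbmul q (Ordinal (ltn_pmod 0 n0), Ordinal n0) t = tbasis k t.
Proof. rewrite /tbmul /= mul0n expr0 scale1r mod0n !add0n; exact: tmon_basis. Qed.

Lemma tbmul_1r (k : fieldType) n (q : k) (n0 : (0 < n)%N) s :
  tbmul q s (Ordinal (ltn_pmod 0 n0), Ordinal n0) = tbasis k s.
Proof. rewrite /tbmul /= mod0n muln0 expr0 scale1r !addn0; exact: tmon_basis. Qed.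

Lemma tmul2_basisl (k : fieldType) n (q : k) (a b : 'I_n * 'I_n) V :
  tmul2 q (ttens (tbasis k a) (tbasis k b)) V =
  \sum_t V t *: ttens (tbmul q a t.1) (tbmul q b t.2).
Proof.
rewrite /tmul2 ttens_basis.
under eq_bigr => s _ do (under eq_bigr => t _ do rewrite ffunE -scalerA; rewrite -scaler_sumr).
by rewrite collapse.
Qed.

Lemma tmul2_basisr (k : fieldType) n (q : k) (a b : 'I_n * 'I_n) U :
  tmul2 q U (ttens (tbasis k a) (tbasis k b)) =
  \sum_s U s *: ttens (tbmul q s.1 a) (tbmul q s.2 b).
Proof.
rewrite /tmul2 ttens_basis.
by under eq_bigr => s _ do (under eq_bigr => t _ do rewrite ffunE mulrC -scalerA; rewrite collapse).
Qed.

Lemma tmul2_1l (k : fieldType) n (q : k) (n0 : (0 < n)%N) V :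
  tmul2 q (ttens (tmon k n 0 0) (tmon k n 0 0)) V = V.
Proof.
rewrite (tmon_ord _ n0 0 n0) tmul2_basisl [RHS]ffun_expand.
apply: eq_bigr => t _; rewrite !tbmul_1l ttens_basis.
by case: t.
Qed.

Lemma tmul2_1r (k : fieldType) n (q : k) (n0 : (0 < n)%N) U :
  tmul2 q U (ttens (tmon k n 0 0) (tmon k n 0 0)) = U.
Proof.
rewrite (tmon_ord _ n0 0 n0) tmul2_basisr [RHS]ffun_expand.
apply: eq_bigr => t _; rewrite !tbmul_1r ttens_basis.
by case: t.
Qed.

Lemma tdelta_basis (k : fieldType) n (q : k) (s : 'I_n * 'I_n) :
  tdelta q (tbasis k s) = tdelta_b q s.
Proof.
rewrite /tdelta; under eq_bigr => t _ do rewrite tbasisE.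
by rewrite collapse.
Qed.

Lemma tdelta_g (k : fieldType) n (q : k) (n0 : (0 < n)%N) :
  tdelta q (tmon k n 1 0) = ttens (tmon k n 1 0) (tmon k n 1 0).
Proof.
rewrite (tmon_ord _ n0 1 n0) tdelta_basis /tdelta_b /= tmul2_1r //.
by congr ttens; apply: tmon_eqmod; rewrite modn_mod.
Qed.

Lemma tdelta_x (k : fieldType) n (q : k) (n1 : (1 < n)%N) :
  tdelta q (tmon k n 0 1) = delta_x k n.
Proof.
have n0 : (0 < n)%N by apply: ltn_trans n1.
rewrite (tmon_ord _ n0 0 n1) tdelta_basis /tdelta_b /= mod0n.
by rewrite !tmul2_1l.
Qed.

Definition eps (k : fieldType) n (u : taft k n) : k :=
  \sum_r u r * (((r.2 : nat) == 0%N)%:R).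

Definition Eps2 (k : fieldType) n (U : {ffun ('I_n * 'I_n) * ('I_n * 'I_n) -> k^o}) : taft k n :=
  \sum_p (U p * (((p.1.2 : nat) == 0%N)%:R)) *: tbasis k p.2.

Lemma Eps2_lin (k : fieldType) n (c : k) (U V : {ffun ('I_n * 'I_n) * ('I_n * 'I_n) -> k^o}) :
  Eps2 (c *: U + V) = c *: Eps2 U + Eps2 V.
Proof.
rewrite /Eps2 scaler_sumr -big_split; apply: eq_bigr => p _.
by rewrite !ffunE scaleoE mulrDl scalerDl scalerA mulrA.
Qed.

Lemma Eps2_0 (k : fieldType) n : Eps2 (0 : {ffun ('I_n * 'I_n) * ('I_n * 'I_n) -> k^o}) = 0.
Proof. by rewrite /Eps2 big1 // => p _; rewrite ffunE mul0r scale0r. Qed.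

Lemma Eps2_scale (k : fieldType) n (c : k) (U : {ffun ('I_n * 'I_n) * ('I_n * 'I_n) -> k^o}) :
  Eps2 (c *: U) = c *: Eps2 U.
Proof. by rewrite -[c *: U]addr0 Eps2_lin Eps2_0 addr0. Qed.

Lemma Eps2_add (k : fieldType) n (U V : {ffun ('I_n * 'I_n) * ('I_n * 'I_n) -> k^o}) :
  Eps2 (U + V) = Eps2 U + Eps2 V.
Proof. by have := Eps2_lin 1 U V; rewrite !scale1r. Qed.

Lemma Eps2_sum (k : fieldType) n (I : Type) (r : seq I) (F : I -> {ffun ('I_n * 'I_n) * ('I_n * 'I_n) -> k^o}) :
  Eps2 (\sum_(i <- r) F i) = \sum_(i <- r) Eps2 (F i).
Proof.
apply: (big_ind2 (fun x y => Eps2 x = y)); first exact: Eps2_0.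
  by move=> x1 x2 y1 y2 <- <-; rewrite Eps2_add.
by [].
Qed.

Lemma Eps2_ttens (k : fieldType) n (u v : taft k n) : Eps2 (ttens u v) = eps u *: v.
Proof.
rewrite /Eps2 (eq_bigr (fun p => (u p.1 * (((p.1.2 : nat) == 0%N)%:R)) *: (v p.2 *: tbasis k p.2))); last first.
  by move=> p _; rewrite ffunE scalerA mulrAC.
rewrite -(pair_bigA _ (fun a b => (u a * (((a.2 : nat) == 0%N)%:R)) *: (v b *: tbasis k b))) /=.
under eq_bigr => a _ do rewrite -scaler_sumr -ffun_expand.
by rewrite /eps scaler_suml.
Qed.

Lemma eps_basis (k : fieldType) n (s : 'I_n * 'I_n) :
  eps (tbasis k s) = (((s.2 : nat) == 0%N)%:R).
Proof. by rewrite /eps; under eq_bigr => r _ do rewrite tbasisE; rewrite collapseM. Qed.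

Lemma eps_scale (k : fieldType) n (c : k) (u : taft k n) : eps (c *: u) = c * eps u.
Proof.
by rewrite /eps mulr_sumr; apply: eq_bigr => r _; rewrite ffunE scaleoE mulrA.
Qed.

Lemma eps_0 (k : fieldType) n : eps (0 : taft k n) = 0.
Proof. by rewrite /eps big1 // => r _; rewrite ffunE mul0r. Qed.

Lemma eps_tmon (k : fieldType) n (n0 : (0 < n)%N) i j :
  eps (tmon k n i j) = ((j == 0%N)%:R).
Proof.
case: (ltnP j n) => hj; first by rewrite (tmon_ord _ n0 i hj) eps_basis.
rewrite tmon_big // eps_0.
by case: j hj => [|j] hj; [rewrite leqn0 in hj; rewrite (eqP hj) in n0 | ].
Qed.

Lemma eps_tbmul (k : fieldType) n (q : k) (n0 : (0 < n)%N) (a b : 'I_n * 'I_n) :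
  eps (tbmul q a b) = (((a.2 : nat) == 0%N)%:R) * (((b.2 : nat) == 0%N)%:R).
Proof.
rewrite /tbmul eps_scale eps_tmon // addn_eq0.
case: (a.2 : nat) => [|m] /=; first by rewrite mul0n expr0 !mul1r.
by rewrite !mulr0 mul0r.
Qed.

Lemma Eps2E (k : fieldType) n (U : {ffun ('I_n * 'I_n) * ('I_n * 'I_n) -> k^o}) :
  Eps2 U = \sum_p (U p * (((p.1.2 : nat) == 0%N)%:R)) *: tbasis k p.2.
Proof. by []. Qed.

Lemma Eps2_tmul2 (k : fieldType) n (q : k) (n0 : (0 < n)%N) (U V : {ffun ('I_n * 'I_n) * ('I_n * 'I_n) -> k^o}) :
  Eps2 (tmul2 q U V) = tmul q (Eps2 U) (Eps2 V).
Proof.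
rewrite /tmul2 Eps2_sum [Eps2 U]Eps2E tmul_suml; apply: eq_bigr => s _.
rewrite Eps2_sum tmul_scalel [Eps2 V]Eps2E tmul_sumr scaler_sumr; apply: eq_bigr => t _.
rewrite Eps2_scale Eps2_ttens eps_tbmul // tmul_scaler tmul_basis !scalerA; congr (_ *: _).
by rewrite mulrACA.
Qed.

Lemma Eps2_delta_x (k : fieldType) n (n0 : (0 < n)%N) :
  Eps2 (delta_x k n) = tmon k n 0 1.
Proof.
by rewrite /delta_x Eps2_add !Eps2_ttens !eps_tmon //= scale0r scale1r add0r.
Qed.

Lemma Eps2_xpow (k : fieldType) n (q : k) (n0 : (0 < n)%N) j :
  Eps2 (delta_xpow n q j) = tmon k n 0 j.
Proof.
elim: j => [|j IH] /=; first by rewrite Eps2_ttens eps_tmon // scale1r.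
rewrite Eps2_tmul2 // IH Eps2_delta_x // tmul_mon // mod0n muln0 expr0 scale1r.
by rewrite addn0 addn1.
Qed.

Lemma Eps2_tdelta_b (k : fieldType) n (q : k) (n0 : (0 < n)%N) (s : 'I_n * 'I_n) :
  Eps2 (tdelta_b q s) = tbasis k s.
Proof.
rewrite /tdelta_b Eps2_tmul2 // Eps2_ttens eps_tmon // scale1r Eps2_xpow //.
rewrite tmul_mon // mul0n expr0 scale1r addn0 add0n; exact: tmon_basis.
Qed.

Lemma Eps2_tdelta (k : fieldType) n (q : k) (n0 : (0 < n)%N) (h : taft k n) :
  Eps2 (tdelta q h) = h.
Proof.
rewrite /tdelta Eps2_sum [RHS]ffun_expand; apply: eq_bigr => s _.
by rewrite Eps2_scale Eps2_tdelta_b.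
Qed.

Lemma sweed (k : fieldType) n (A : lmodType k) (a b : 'I_n * 'I_n) (F : _ -> A) :
  \sum_p ttens (tbasis k a) (tbasis k b) p *: F p = F (a, b).
Proof. by rewrite ttens_basis; under eq_bigr => p _ do rewrite ffunE; rewrite collapse. Qed.

Lemma sweedD (k : fieldType) n (A : lmodType k) (U V : {ffun ('I_n * 'I_n) * ('I_n * 'I_n) -> k^o}) (F : _ -> A) :
  \sum_p (U + V) p *: F p = \sum_p U p *: F p + \sum_p V p *: F p.
Proof. by rewrite -big_split; apply: eq_bigr => p _; rewrite ffunE scalerDl. Qed.

Unset Implicit Arguments. Set Strict Implicit.

Theorem proposition3p2 (k : fieldType) (n : nat) (q : k) (A : algType k)
    (act : taft k n -> A -> A) :
  (2 <= n)%N -> n.-primitive_root q ->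
  taft_bilinear act -> taft_partial_action q act ->
  act (tmon k n 1 0) 1 = 1 ->
  taft_global_action q act.
Proof.
move=> n2 _ [Hl Hr] [P1 P2 P3] Hg.
have n0 : (0 < n)%N by apply: ltn_trans n2.
have act0 : forall a, act 0 a = 0.
  move=> a; have := Hl 1 0 0 a; rewrite !scale1r !addr0 => e.
  by have := congr1 (fun z => z - act 0 a) e; rewrite addrK subrr => <-.
have actr0 : forall h, act h 0 = 0.
  move=> h; have := Hr h 1 0 0; rewrite !scale1r !addr0 => e.
  by have := congr1 (fun z => z - act h 0) e; rewrite addrK subrr => <-.
have act_sum : forall (I : Type) (r : seq I) (c : I -> k) (F : I -> taft k n) a,
    act (\sum_(i <- r) c i *: F i) a = \sum_(i <- r) c i *: act (F i) a.
  move=> I r c F a.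
  apply: (big_ind2 (fun x y => act x a = y)); first exact: act0.
    by move=> x1 x2 y1 y2 <- <-; have := Hl 1 x1 y1 a; rewrite !scale1r.
  by move=> i _; have := Hl (c i) (F i) 0 a; rewrite !addr0 act0 addr0.
have tb : forall a b (hb : (b < n)%N),
    tbasis k (Ordinal (ltn_pmod a n0), Ordinal hb) = tmon k n a b.
  by move=> a b hb; rewrite -tmon_ord.
have Act_g : forall h' a, act (tmon k n 1 0) (act h' a) = act (tmul q (tmon k n 1 0) h') a.
  move=> h' a; rewrite P3 tdelta_g // -(tb 1%N 0%N n0) sweed /= tb Hg mul1r.
  by [].
have ex0 : tmul q (tmon k n 0 1) (tmon k n 0 0) = tmon k n 0 1.
  by rewrite tmul_mon // mod0n muln0 expr0 scale1r.
have Act_x1 : act (tmon k n 0 1) 1 = 0.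
  have := P3 (tmon k n 0 1) (tmon k n 0 0) 1.
  rewrite P1 tdelta_x // /delta_x sweedD -(tb 0%N 1%N n2) -(tb 0%N 0%N n0) -(tb 1%N 0%N n0).
  rewrite !sweed /= !tb tmul_1l // ex0 P1 Hg mulr1 mul1r => e.
  by have := congr1 (fun z => z - act (tmon k n 0 1) 1) e; rewrite addrK subrr => <-.
have Act_x : forall h' a, act (tmon k n 0 1) (act h' a) = act (tmul q (tmon k n 0 1) h') a.
  move=> h' a; rewrite P3 tdelta_x // /delta_x sweedD -(tb 0%N 1%N n2) -(tb 0%N 0%N n0) -(tb 1%N 0%N n0).
  by rewrite !sweed /= !tb Act_x1 mul0r add0r Hg mul1r.
have act_gi : forall i, act (tmon k n i 0) 1 = 1.
  elim=> [|i IH]; first exact: P1.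
  have e : tmul q (tmon k n 1 0) (tmon k n i 0) = tmon k n i.+1 0.
    by rewrite tmul_mon // mul0n expr0 scale1r add1n.
  by rewrite -e -Act_g IH Hg.
have act_xj : forall j, act (tmon k n 0 j.+1) 1 = 0.
  elim=> [|j IH]; first exact: Act_x1.
  have e : tmul q (tmon k n 0 1) (tmon k n 0 j.+1) = tmon k n 0 j.+2.
    by rewrite tmul_mon // mod0n muln0 expr0 scale1r add0n add1n.
  by rewrite -e -Act_x IH actr0.
have act_gixj : forall i j, act (tmon k n i j.+1) 1 = 0.
  move=> i j; elim: i => [|i IH]; first exact: act_xj.
  have e : tmul q (tmon k n 1 0) (tmon k n i j.+1) = tmon k n i.+1 j.+1.
    by rewrite tmul_mon // mul0n expr0 scale1r add1n add0n.
  by rewrite -e -Act_g IH actr0.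
have act_basis : forall s, act (tbasis k s) 1 = (((s.2 : nat) == 0%N)%:R) *: 1.
  move=> s; rewrite -tmon_basis; case: s => a [[|j] hj] /=.
    by rewrite act_gi scale1r.
  by rewrite act_gixj scale0r.
move=> h h' a; rewrite P3.
under eq_bigr => p _ do rewrite act_basis -scalerAl mul1r scalerA.
rewrite -act_sum; congr (act _ a).
rewrite -[in RHS](Eps2_tdelta q n0 h) Eps2E tmul_suml; apply: eq_bigr => p _.
by rewrite tmul_scalel.
Qed.
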